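(* Let $p$ be a two-phase solution with constants $c_0,c_1,c_2$. At points where $p\neq0$, $$\partial_x\nu_1=2i\nu_1(\mu_1+\mu_2-\mu_1^*-\mu_2^* ),\qquad \partial_x\nu_2=4i\nu_1(\mu_1^*\mu_2^*-\mu_1\mu_2)-2c_2\,\partial_x\nu_1,\qquad \partial_t\nu_1=\partial_x\nu_2,$$ $$\partial_t\nu_2=8i\nu_1\big((\mu_1-\mu_1^* )|\mu_2|^2+(\mu_2-\mu_2^* )|\mu_1|^2\big)-4c_2\,\partial_x\nu_2-4c_2^2\,\partial_x\nu_1.$$
   Context: Let $p(x,t)$, $(x,t)\in\mathbb R^2$, be a smooth complex-valued solution of the focusing nonlinear Schrödinger equation $ip_t+p_{xx}+2|p|^2p=0$; $^*$ denotes complex conjugation and subscripts denote partial derivatives. Put $\mathbb U=\begin{pmatrix}-i\lambda& ip\\ ip^*& i\lambda\end{pmatrix}$ and $\mathbb V=\begin{pmatrix}-2i\lambda^2+i|p|^2& 2i\lambda p-p_x\\ 2i\lambda p^*+p^*_x& 2i\lambda^2-i|p|^2\end{pmatrix}$. The solution $p$ is called a two-phase solution if there exist real constants $c_0,c_1,c_2$ such that the matrix $\Psi=\begin{pmatrix}\Psi_{11}&\Psi_{12}\\ \Psi_{21}&-\Psi_{11}\end{pmatrix}$ with $\Psi_{11}=-i\lambda^3-ic_2\lambda^2+(\tfrac12 i|p|^2-ic_1)\lambda+\tfrac14(pp^*_x-p_xp^* )+\tfrac12 ic_2|p|^2-ic_0$, $\Psi_{12}=ip\lambda^2+(-\tfrac12p_x+ic_2p)\lambda-\tfrac14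 ip_{xx}-\tfrac12 ip|p|^2-\tfrac12c_2p_x+ic_1p$, $\Psi_{21}=ip^*\lambda^2+(\tfrac12p^*_x+ic_2p^* )\lambda-\tfrac14 ip^*_{xx}-\tfrac12 ip^*|p|^2+\tfrac12c_2p^*_x+ic_1p^*$ satisfies $\Psi_x=[\mathbb U,\Psi]$ and $\Psi_t=[\mathbb V,\Psi]$ identically in $\lambda\in\mathbb C$. Set $\nu_1=|p|^2$ and $\nu_2=i(p^*p_x-pp^*_x)$ (both real). At points where $p\neq0$ the Dirichlet eigenvalues $\mu_1,\mu_2\in\mathbb C$ are defined (up to order) by $\Psi_{12}(\lambda)=ip(\lambda-\mu_1)(\lambda-\mu_2)$. *)

(* Defs.v *)
From Stdlib Require Import Reals List.
Open Scope R_scope.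

Definition Cx : Type := (R * R)%type.
Definition Cre (z : Cx) : R := fst z.
Definition Cim (z : Cx) : R := snd z.
Definition RtoC (r : R) : Cx := (r, 0).
Definition C0 : Cx := (0, 0).
Definition Ci : Cx := (0, 1).
Definition Cadd (z w : Cx) : Cx := (fst z + fst w, snd z + snd w).
Definition Copp (z : Cx) : Cx := (- fst z, - snd z).
Definition Csub (z w : Cx) : Cx := Cadd z (Copp w).
Definition Cmul (z w : Cx) : Cx :=
  (fst z * fst w - snd z * snd w, fst z * snd w + snd z * fst w).
Definition Cconj (z : Cx) : Cx := (fst z, - snd z).
Definition Cnorm2 (z : Cx) : R := fst z * fst z + snd z * snd z.

Declare Scope C_scope.
Delimit Scope C_scope with C.
Infix "+" := Cadd : C_scope.
Infix "-" := Csub : C_scope.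
Infix "*" := Cmul : C_scope.
Notation "- z" := (Copp z) : C_scope.

Definition Cderiv (f : R -> Cx) (y : R) (l : Cx) : Prop :=
  derivable_pt_lim (fun s => fst (f s)) y (fst l) /\
  derivable_pt_lim (fun s => snd (f s)) y (snd l).

Record M2 : Type := mkM2 { m11 : Cx; m12 : Cx; m21 : Cx; m22 : Cx }.

Definition Mmul (A B : M2) : M2 :=
  mkM2 (m11 A * m11 B + m12 A * m21 B)%C (m11 A * m12 B + m12 A * m22 B)%C
       (m21 A * m11 B + m22 A * m21 B)%C (m21 A * m12 B + m22 A * m22 B)%C.
Definition Msub (A B : M2) : M2 :=
  mkM2 (m11 A - m11 B)%C (m12 A - m12 B)%C (m21 A - m21 B)%C (m22 A - m22 B)%C.
Definition Mcomm (A B : M2) : M2 := Msub (Mmul A B) (Mmul B A).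

Definition Mderiv (F : R -> M2) (y : R) (L : M2) : Prop :=
  Cderiv (fun s => m11 (F s)) y (m11 L) /\ Cderiv (fun s => m12 (F s)) y (m12 L) /\
  Cderiv (fun s => m21 (F s)) y (m21 L) /\ Cderiv (fun s => m22 (F s)) y (m22 L).

(** Smoothness (C^infinity) of a real function of (x,t) in R^2:
    there is a family D w (w a word in {x = false, t = true}) of jointly
    continuous functions with D nil = f, and D (false :: w) (resp. D (true :: w))
    is the partial derivative in x (resp. t) of D w. *)
Definition jcont (g : R -> R -> R) : Prop :=
  forall x t eps, 0 < eps -> exists delta, 0 < delta /\
    forall x' t', Rabs (x' - x) < delta -> Rabs (t' - t) < delta ->
      Rabs (g x' t' - g x t) < eps.

Definition smooth2 (f : R -> R -> R) : Prop :=
  exists D : list bool -> R -> R -> R,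
    (forall x t, D nil x t = f x t) /\
    forall w, jcont (D w) /\
      (forall x t, derivable_pt_lim (fun s => D w s t) x (D (false :: w) x t)) /\
      (forall x t, derivable_pt_lim (fun s => D w x s) t (D (true :: w) x t)).

Definition Cnum (r : R) : Cx := RtoC r.

(** The Lax matrices; arguments: spectral parameter lam, values p, p_x at the point. *)
Definition Umat (lam p : Cx) : M2 :=
  mkM2 (- (Ci * lam))%C (Ci * p)%C (Ci * Cconj p)%C (Ci * lam)%C.

Definition Vmat (lam p px : Cx) : M2 :=
  mkM2 (Cnum (-2) * Ci * lam * lam + Ci * RtoC (Cnorm2 p))%C
       (Cnum 2 * Ci * lam * p - px)%C
       (Cnum 2 * Ci * lam * Cconj p + Cconj px)%C
       (Cnum 2 * Ci * lam * lam - Ci * RtoC (Cnorm2 p))%C.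

Definition Psi11 (c0 c1 c2 : R) (lam p px pxx : Cx) : Cx :=
  (- (Ci * lam * lam * lam) - Ci * RtoC c2 * lam * lam
   + (Cnum (1/2) * Ci * RtoC (Cnorm2 p) - Ci * RtoC c1) * lam
   + Cnum (1/4) * (p * Cconj px - px * Cconj p)
   + Cnum (1/2) * Ci * RtoC c2 * RtoC (Cnorm2 p) - Ci * RtoC c0)%C.

Definition Psi12 (c0 c1 c2 : R) (lam p px pxx : Cx) : Cx :=
  (Ci * p * lam * lam + (- (Cnum (1/2) * px) + Ci * RtoC c2 * p) * lam
   - Cnum (1/4) * Ci * pxx - Cnum (1/2) * Ci * p * RtoC (Cnorm2 p)
   - Cnum (1/2) * RtoC c2 * px + Ci * RtoC c1 * p)%C.

Definition Psi21 (c0 c1 c2 : R) (lam p px pxx : Cx) : Cx :=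
  (Ci * Cconj p * lam * lam + (Cnum (1/2) * Cconj px + Ci * RtoC c2 * Cconj p) * lam
   - Cnum (1/4) * Ci * Cconj pxx - Cnum (1/2) * Ci * Cconj p * RtoC (Cnorm2 p)
   + Cnum (1/2) * RtoC c2 * Cconj px + Ci * RtoC c1 * Cconj p)%C.

Definition Psimat (c0 c1 c2 : R) (lam p px pxx : Cx) : M2 :=
  mkM2 (Psi11 c0 c1 c2 lam p px pxx) (Psi12 c0 c1 c2 lam p px pxx)
       (Psi21 c0 c1 c2 lam p px pxx) (- Psi11 c0 c1 c2 lam p px pxx)%C.

Definition nu1v (p : Cx) : Cx := RtoC (Cnorm2 p).
Definition nu2v (p px : Cx) : Cx := (Ci * (Cconj p * px - p * Cconj px))%C.

(* Main.v *)
Require Import Defs.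
From Stdlib Require Import Reals List Lra.
Open Scope R_scope.


Lemma lin_deriv (f g h : R -> R) (x lf lg al be ga : R) :
  derivable_pt_lim f x lf -> derivable_pt_lim g x lg ->
  (forall s, h s = al * f s + be * g s + ga) ->
  derivable_pt_lim h x (al * lf + be * lg).
Proof.
  intros Hf Hg E.
  apply derivable_pt_lim_ext with (f := fun s => al * f s + be * g s + ga).
  { intro z; symmetry; apply E. }
  replace (al * lf + be * lg) with (al * lf + be * lg + 0) by ring.
  apply derivable_pt_lim_plus; [| apply derivable_pt_lim_const].
  apply derivable_pt_lim_plus; apply derivable_pt_lim_scal; assumption.
Qed.

Lemma zero_deriv (h : R -> R) x : (forall s, h s = 0) -> derivable_pt_lim h x 0.
Proof.
  intros E. apply derivable_pt_lim_ext with (f := fun _ => 0).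
  { intro; symmetry; apply E. } apply derivable_pt_lim_const.
Qed.

Lemma nu1_id c0 c1 c2 P Px Pxx :
  Cnorm2 P = 2 * snd (Psi11 c0 c1 c2 (1,0) P Px Pxx) + (-2) * snd (Psi11 c0 c1 c2 C0 P Px Pxx)
    + 2 * (1 + c1 + c2).
Proof.
  destruct P as [a b]; destruct Px as [u v]; destruct Pxx as [w z].
  unfold Psi11, Cnorm2, Cnum, RtoC, Ci, C0, Cmul, Cadd, Csub, Copp, Cconj; simpl; field.
Qed.

Lemma nu2_id c0 c1 c2 P Px Pxx :
  fst (nu2v P Px) = (-4 * c2) * snd (Psi11 c0 c1 c2 (1,0) P Px Pxx)
    + (4 + 4 * c2) * snd (Psi11 c0 c1 c2 C0 P Px Pxx) + (4 * c0 - 4 * c2 * (1 + c1 + c2)).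
Proof.
  destruct P as [a b]; destruct Px as [u v]; destruct Pxx as [w z].
  unfold nu2v, Psi11, Cnorm2, Cnum, RtoC, Ci, C0, Cmul, Cadd, Csub, Copp, Cconj; simpl; field.
Qed.

Lemma nu2_im P Px : snd (nu2v P Px) = 0.
Proof.
  destruct P as [a b]; destruct Px as [u v].
  unfold nu2v, Ci, Cmul, Cadd, Csub, Copp, Cconj; simpl; ring.
Qed.

Lemma coef c0 c1 c2 a b u v w z m n k l :
  (forall lam, Psi12 c0 c1 c2 lam (a,b) (u,v) (w,z) = (Ci * (a,b) * (lam - (m,n)) * (lam - (k,l)))%C) ->
  u = -2*(a*(n+l)+b*(m+k+c2)) /\ v = 2*(a*(m+k+c2) - b*(n+l)) /\
  w = -2*a*(a*a+b*b) - 2*c2*v + 4*c1*a - 4*(a*(m*k-n*l) - b*(m*l+n*k)) /\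
  z = -2*b*(a*a+b*b) + 2*c2*u + 4*c1*b - 4*(a*(m*l+n*k) + b*(m*k-n*l)).
Proof.
  intro H.
  pose proof (H (1,0)) as H1. pose proof (H C0) as H0. pose proof (H (-1,0)) as Hm. clear H.
  unfold Psi12, Cnorm2, Cnum, RtoC, Ci, C0, Cmul, Cadd, Csub, Copp, Cconj in *; cbv beta iota zeta delta [fst snd] in *.
  injection H1 as H1a H1b. injection H0 as H0a H0b. injection Hm as Hma Hmb.
  assert (Hu : u = -2*(a*(n+l)+b*(m+k+c2))) by lra.
  assert (Hv : v = 2*(a*(m+k+c2) - b*(n+l))) by lra.
  split; [exact Hu|]. split; [exact Hv|]. split; lra.
Qed.

Ltac U := cbv beta iota zeta delta [Psimat Psi11 Psi21 Psi12 Mcomm Msub Mmul Umat Vmat nu1v nu2v Cnorm2 Cnum RtoC Ci C0 Cmul Cadd Csub Copp Cconj fst snd m11 m12 m21 m22].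

Lemma g1 c0 c1 c2 a b m n k l u v w z :
  u = -2*(a*(n+l)+b*(m+k+c2)) -> v = 2*(a*(m+k+c2) - b*(n+l)) ->
  w = -2*a*(a*a+b*b) - 2*c2*v + 4*c1*a - 4*(a*(m*k-n*l) - b*(m*l+n*k)) ->
  z = -2*b*(a*a+b*b) + 2*c2*u + 4*c1*b - 4*(a*(m*l+n*k) + b*(m*k-n*l)) ->
  (2 * snd (m11 (Mcomm (Umat (1,0) (a,b)) (Psimat c0 c1 c2 (1,0) (a,b) (u,v) (w,z))))
   + (-2) * snd (m11 (Mcomm (Umat C0 (a,b)) (Psimat c0 c1 c2 C0 (a,b) (u,v) (w,z)))), 0)
  = (Cnum 2 * Ci * nu1v (a,b) * ((m,n) + (k,l) - Cconj (m,n) - Cconj (k,l)))%C.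
Proof. intros Hu Hv Hw Hz. U. f_equal. subst w z; subst u v. field. field. Qed.

Lemma g2 c0 c1 c2 a b m n k l u v w z :
  u = -2*(a*(n+l)+b*(m+k+c2)) -> v = 2*(a*(m+k+c2) - b*(n+l)) ->
  w = -2*a*(a*a+b*b) - 2*c2*v + 4*c1*a - 4*(a*(m*k-n*l) - b*(m*l+n*k)) ->
  z = -2*b*(a*a+b*b) + 2*c2*u + 4*c1*b - 4*(a*(m*l+n*k) + b*(m*k-n*l)) ->
  ((-4 * c2) * snd (m11 (Mcomm (Umat (1,0) (a,b)) (Psimat c0 c1 c2 (1,0) (a,b) (u,v) (w,z))))
   + (4 + 4 * c2) * snd (m11 (Mcomm (Umat C0 (a,b)) (Psimat c0 c1 c2 C0 (a,b) (u,v) (w,z)))), 0)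
  = (Cnum 4 * Ci * nu1v (a,b) * (Cconj (m,n) * Cconj (k,l) - (m,n) * (k,l))
     - Cnum 2 * RtoC c2 *
       ((2 * snd (m11 (Mcomm (Umat (1,0) (a,b)) (Psimat c0 c1 c2 (1,0) (a,b) (u,v) (w,z))))
       + (-2) * snd (m11 (Mcomm (Umat C0 (a,b)) (Psimat c0 c1 c2 C0 (a,b) (u,v) (w,z)))))%R, 0%R))%C.
Proof. intros Hu Hv Hw Hz. U. f_equal. subst w z; subst u v. field. field. Qed.

Lemma g3 c0 c1 c2 a b m n k l u v w z :
  u = -2*(a*(n+l)+b*(m+k+c2)) -> v = 2*(a*(m+k+c2) - b*(n+l)) ->
  w = -2*a*(a*a+b*b) - 2*c2*v + 4*c1*a - 4*(a*(m*k-n*l) - b*(m*l+n*k)) ->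
  z = -2*b*(a*a+b*b) + 2*c2*u + 4*c1*b - 4*(a*(m*l+n*k) + b*(m*k-n*l)) ->
  (2 * snd (m11 (Mcomm (Vmat (1,0) (a,b) (u,v)) (Psimat c0 c1 c2 (1,0) (a,b) (u,v) (w,z))))
   + (-2) * snd (m11 (Mcomm (Vmat C0 (a,b) (u,v)) (Psimat c0 c1 c2 C0 (a,b) (u,v) (w,z)))), 0)
  = ((-4 * c2) * snd (m11 (Mcomm (Umat (1,0) (a,b)) (Psimat c0 c1 c2 (1,0) (a,b) (u,v) (w,z))))
   + (4 + 4 * c2) * snd (m11 (Mcomm (Umat C0 (a,b)) (Psimat c0 c1 c2 C0 (a,b) (u,v) (w,z)))), 0).
Proof. intros Hu Hv Hw Hz. U. f_equal. subst w z; subst u v. field. Qed.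

Lemma g4 c0 c1 c2 a b m n k l u v w z :
  u = -2*(a*(n+l)+b*(m+k+c2)) -> v = 2*(a*(m+k+c2) - b*(n+l)) ->
  w = -2*a*(a*a+b*b) - 2*c2*v + 4*c1*a - 4*(a*(m*k-n*l) - b*(m*l+n*k)) ->
  z = -2*b*(a*a+b*b) + 2*c2*u + 4*c1*b - 4*(a*(m*l+n*k) + b*(m*k-n*l)) ->
  ((-4 * c2) * snd (m11 (Mcomm (Vmat (1,0) (a,b) (u,v)) (Psimat c0 c1 c2 (1,0) (a,b) (u,v) (w,z))))
   + (4 + 4 * c2) * snd (m11 (Mcomm (Vmat C0 (a,b) (u,v)) (Psimat c0 c1 c2 C0 (a,b) (u,v) (w,z)))), 0)
  = (Cnum 8 * Ci * nu1v (a,b)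
       * (((m,n) - Cconj (m,n)) * ((k,l) * Cconj (k,l))
          + ((k,l) - Cconj (k,l)) * ((m,n) * Cconj (m,n)))
     - Cnum 4 * RtoC c2 *
       (((-4 * c2) * snd (m11 (Mcomm (Umat (1,0) (a,b)) (Psimat c0 c1 c2 (1,0) (a,b) (u,v) (w,z))))
       + (4 + 4 * c2) * snd (m11 (Mcomm (Umat C0 (a,b)) (Psimat c0 c1 c2 C0 (a,b) (u,v) (w,z)))))%R, 0%R)
     - Cnum 4 * RtoC c2 * RtoC c2 *
       ((2 * snd (m11 (Mcomm (Umat (1,0) (a,b)) (Psimat c0 c1 c2 (1,0) (a,b) (u,v) (w,z))))
       + (-2) * snd (m11 (Mcomm (Umat C0 (a,b)) (Psimat c0 c1 c2 C0 (a,b) (u,v) (w,z)))))%R, 0%R))%C.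
Proof. intros Hu Hv Hw Hz. U. f_equal. subst w z; subst u v. field. field. Qed.

Theorem mainTheorem4
  (p px pxx pt : R -> R -> Cx)
  (* p is smooth; px, pxx, pt are its partial derivatives p_x, p_xx, p_t *)
  (Hsm_re : smooth2 (fun x t => Cre (p x t)))
  (Hsm_im : smooth2 (fun x t => Cim (p x t)))
  (Hpx : forall x t, Cderiv (fun s => p s t) x (px x t))
  (Hpxx : forall x t, Cderiv (fun s => px s t) x (pxx x t))
  (Hpt : forall x t, Cderiv (fun s => p x s) t (pt x t))
  (* focusing NLS: i p_t + p_xx + 2 |p|^2 p = 0 *)
  (Hnls : forall x t,
     (Ci * pt x t + pxx x t + Cnum 2 * RtoC (Cnorm2 (p x t)) * p x t)%C = C0)
  (* two-phase solution with real constants c0 c1 c2 *)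
  (c0 c1 c2 : R)
  (HPsix : forall (lam : Cx) x t,
     Mderiv (fun s => Psimat c0 c1 c2 lam (p s t) (px s t) (pxx s t)) x
            (Mcomm (Umat lam (p x t)) (Psimat c0 c1 c2 lam (p x t) (px x t) (pxx x t))))
  (HPsit : forall (lam : Cx) x t,
     Mderiv (fun s => Psimat c0 c1 c2 lam (p x s) (px x s) (pxx x s)) t
            (Mcomm (Vmat lam (p x t) (px x t))
                   (Psimat c0 c1 c2 lam (p x t) (px x t) (pxx x t)))) :
  forall (x t : R) (mu1 mu2 : Cx),
    p x t <> C0 ->
    (forall lam : Cx, Psi12 c0 c1 c2 lam (p x t) (px x t) (pxx x t)
                     = (Ci * p x t * (lam - mu1) * (lam - mu2))%C) ->
    exists d1x d2x d1t d2t : Cx,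
      Cderiv (fun s => nu1v (p s t)) x d1x /\
      Cderiv (fun s => nu2v (p s t) (px s t)) x d2x /\
      Cderiv (fun s => nu1v (p x s)) t d1t /\
      Cderiv (fun s => nu2v (p x s) (px x s)) t d2t /\
      d1x = (Cnum 2 * Ci * nu1v (p x t) * (mu1 + mu2 - Cconj mu1 - Cconj mu2))%C /\
      d2x = (Cnum 4 * Ci * nu1v (p x t) * (Cconj mu1 * Cconj mu2 - mu1 * mu2)
             - Cnum 2 * RtoC c2 * d1x)%C /\
      d1t = d2x /\
      d2t = (Cnum 8 * Ci * nu1v (p x t)
               * ((mu1 - Cconj mu1) * (mu2 * Cconj mu2)
                  + (mu2 - Cconj mu2) * (mu1 * Cconj mu1))
             - Cnum 4 * RtoC c2 * d2x - Cnum 4 * RtoC c2 * RtoC c2 * d1x)%C.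
Proof.
  intros x t mu1 mu2 Hp0 Hmu.
  destruct (HPsix (1,0) x t) as [[_ D1x] _].
  destruct (HPsix C0 x t) as [[_ D0x] _].
  destruct (HPsit (1,0) x t) as [[_ D1t] _].
  destruct (HPsit C0 x t) as [[_ D0t] _].
  cbv beta in D1x, D0x, D1t, D0t.
  set (K1x := m11 (Mcomm (Umat (1,0) (p x t)) (Psimat c0 c1 c2 (1,0) (p x t) (px x t) (pxx x t)))) in *.
  set (K0x := m11 (Mcomm (Umat C0 (p x t)) (Psimat c0 c1 c2 C0 (p x t) (px x t) (pxx x t)))) in *.
  set (K1t := m11 (Mcomm (Vmat (1,0) (p x t) (px x t)) (Psimat c0 c1 c2 (1,0) (p x t) (px x t) (pxx x t)))) in *.
  set (K0t := m11 (Mcomm (Vmat C0 (p x t) (px x t)) (Psimat c0 c1 c2 C0 (p x t) (px x t) (pxx x t)))) in *.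
  exists (2 * snd K1x + (-2) * snd K0x, 0), ((-4 * c2) * snd K1x + (4 + 4 * c2) * snd K0x, 0),
         (2 * snd K1t + (-2) * snd K0t, 0), ((-4 * c2) * snd K1t + (4 + 4 * c2) * snd K0t, 0).
  split; [split; simpl; [eapply lin_deriv; [exact D1x| exact D0x| intro s; cbv beta; simpl; exact (nu1_id c0 c1 c2 (p s t) (px s t) (pxx s t))] | apply derivable_pt_lim_const]|].
  split; [split; simpl; [eapply lin_deriv; [exact D1x| exact D0x| intro s; cbv beta; exact (nu2_id c0 c1 c2 (p s t) (px s t) (pxx s t))] | apply zero_deriv; intro; apply nu2_im]|].
  split; [split; simpl; [eapply lin_deriv; [exact D1t| exact D0t| intro s; cbv beta; simpl; exact (nu1_id c0 c1 c2 (p x s) (px x s) (pxx x s))] | apply derivable_pt_lim_const]|].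
  split; [split; simpl; [eapply lin_deriv; [exact D1t| exact D0t| intro s; cbv beta; exact (nu2_id c0 c1 c2 (p x s) (px x s) (pxx x s))] | apply zero_deriv; intro; apply nu2_im]|].
  subst K1x K0x K1t K0t.
  revert Hmu. clear.
  destruct (p x t) as [a b]; destruct (px x t) as [u v]; destruct (pxx x t) as [w z].
  destruct mu1 as [m n]; destruct mu2 as [k l]. intro Hmu.
  destruct (coef c0 c1 c2 a b u v w z m n k l Hmu) as [Hu [Hv [Hw Hz]]].
  refine (conj _ (conj _ (conj _ _))).
  - exact (g1 c0 c1 c2 a b m n k l u v w z Hu Hv Hw Hz).
  - exact (g2 c0 c1 c2 a b m n k l u v w z Hu Hv Hw Hz).
  - exact (g3 c0 c1 c2 a b m n k l u v w z Hu Hv Hw Hz).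
  - exact (g4 c0 c1 c2 a b m n k l u v w z Hu Hv Hw Hz).
Qed.
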